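(* Let $a,b,n$ be positive integers with $a\le b$. If a $(b,a,n)$ strategy exists, then a $(b,\lfloor b/a\rfloor\cdot n)$ strategy for the GKS game exists.
   Context: The GKS game with parameter $n$ (a positive integer). A strategy pair $(S,T)$ consists of a function $S$ assigning a bit in $\{0,1\}$ to every sequence $\pi_1\pi_2\ldots\pi_i$ of distinct elements of $[n]=\{1,\dots,n\}$ with $1\le i\le n-1$, and a function $T:\{0,1\}^n\to 2^{[n]}$. For a permutation $\pi=\pi_1\ldots\pi_n$ of $[n]$ and a bit $b$, the final array $A_{\rm final}\in\{0,1\}^n$ is defined by $A_{\rm final}[\pi_i]=S(\pi_1\ldots\pi_i)$ for $1\le i\le n-1$ and $A_{\rm final}[\pi_n]=b$. The pair $(S,T)$ is a $(k,n)$ strategy if for every permutation $\pi$ of $[n]$ and every bit $b$ we have $\pi_n\in T(A_{\rm final})$, and moreover $|T(\sigma)|\le k$ for every $\sigma\in\{0,1\}^n$. A $(k,k_A,n)$ strategy is a $(k,n)$ strategy $(S,T)$ in which $S$ is additionally defined on all full permutations $\pi_1\ldots\pi_n$ of $[n]$ (''Alice-mode''), such that, letting $\mathcal{O}_A$ be the set of all arrays $A\in\{0,1\}^n$ with $A[\pi_i]=S(\pi_1\ldots\pi_i)$ for all $1\le i\le n$, for some permutation $\pi$ of $[n]$, we have $|T(\sigma)|\le k_A$ for every $\sigma\in\mathcal{O}_A$. *)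

(* Defs.v *)
From mathcomp Require Import all_boot.
Set Implicit Arguments. Unset Strict Implicit. Unset Printing Implicit Defensive.

(* A sequence pi_1 ... pi_i of distinct elements is a
   seq 'I_n; a permutation pi of [n] is a seq s with perm_eq s (enum 'I_n).
   S : seq 'I_n -> bool is total; only its values on sequences of distinct
   elements of length 1..n-1 (resp. 1..n in Alice-mode) matter. *)

Definition gks_S n := seq 'I_n -> bool.
Definition gks_T n := {ffun 'I_n -> bool} -> {set 'I_n}.

(* A_final[pi_i] = S(pi_1..pi_i) for i <= n-1, A_final[pi_n] = b.
   For x = pi_{j+1} (j = index x s, 0-based), the prefix is take (j+1) s. *)
Definition final_array n (S : gks_S n) (s : seq 'I_n) (b : bool)
  : {ffun 'I_n -> bool} :=
  [ffun x => if (index x s).+1 < size s then S (take (index x s).+1 s) else b].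

Definition alice_array n (S : gks_S n) (s : seq 'I_n) : {ffun 'I_n -> bool} :=
  [ffun x => S (take (index x s).+1 s)].

(* (k,n) strategy.  The permutation is written y :: s' so that pi_n = last y s'. *)
Definition kn_strategy (k n : nat) (S : gks_S n) (T : gks_T n) : Prop :=
  (forall (y : 'I_n) (s' : seq 'I_n) (b : bool),
      perm_eq (y :: s') (enum 'I_n) ->
      last y s' \in T (final_array S (y :: s') b))
  /\ (forall sigma : {ffun 'I_n -> bool}, #|T sigma| <= k).

Definition kkAn_strategy (k kA n : nat) (S : gks_S n) (T : gks_T n) : Prop :=
  kn_strategy k S T /\
  (forall s : seq 'I_n, perm_eq s (enum 'I_n) ->
      #|T (alice_array S s)| <= kA).

(* Main.v *)
Require Import Defs.
From mathcomp Require Import all_boot.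
Set Implicit Arguments. Unset Strict Implicit. Unset Printing Implicit Defensive.

Lemma card_bigcup_leq (T : finType) q (F : 'I_q -> {set T}) :
  #|\bigcup_(g < q) F g| <= \sum_(g < q) #|F g|.
Proof.
apply: (big_ind2 (fun (U : {set T}) s => #|U| <= s)) => //.
- by rewrite cards0.
- move=> U1 s1 U2 s2 h1 h2; apply: leq_trans (leq_card_setU U1 U2) _.
  exact: leq_add.
Qed.

Lemma take_index_split (T : eqType) (x : T) l l' : x \notin l ->
  take (index x (l ++ x :: l')).+1 (l ++ x :: l') = l ++ [:: x].
Proof.
move=> hx; rewrite index_cat (negbTE hx) /= eqxx addn0 take_cat ltnNge leqnSn /= subSnn.
by rewrite /= take0. Qed.

Lemma take_index_rcons (T : eqType) (x : T) s : x \in s ->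
  take (index x s).+1 s = rcons (take (index x s) s) x.
Proof. by move=> hx; rewrite (take_nth x) ?index_mem // nth_index. Qed.

Lemma index_last (T : eqType) (t : seq T) w x : uniq (rcons t w) ->
  x \in rcons t w -> ((index x (rcons t w)).+1 < size (rcons t w)) = (x != w).
Proof.
rewrite -cats1 cat_uniq /= andbT orbF mem_cat inE => /andP [_ hw] /orP [hx|/eqP ->].
- rewrite index_cat hx size_cat /= addn1 ltnS index_mem hx.
  by apply/esym; apply: contraNneq hw => <-.
- rewrite index_cat (negbTE hw) size_cat /= !eqxx addn0 addn1 ltnn. by [].
Qed.

Lemma rcons_cons (T : Type) (t : seq T) w :
  exists y s, rcons t w = y :: s /\ last y s = w.
Proof.
case: t => [|y t]; first by exists w, [::].
by exists y, (rcons t w); rewrite last_rcons.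
Qed.

Section Constr.
Variables (n' q : nat).
Local Notation n := n'.+1.
Local Notation m := (q * n).

Definition proj (x : 'I_m) : 'I_n := inord (x %% n).
Definition grp (x : 'I_m) : nat := x %/ n.
Definition restr (g : nat) (s : seq 'I_m) : seq 'I_n :=
  map proj (filter (fun y => grp y == g) s).

Lemma emb_subproof (g : 'I_q) (j : 'I_n) : g * n + j < m.
Proof.
have h1 : g * n + j < g * n + n by rewrite ltn_add2l.
apply: (leq_trans h1); rewrite -mulSnr; apply: leq_mul => //.
Qed.

Definition emb (g : 'I_q) (j : 'I_n) : 'I_m := Ordinal (emb_subproof g j).

Lemma proj_val x : nat_of_ord (proj x) = x %% n.
Proof. by rewrite /proj inordK // ltn_pmod. Qed.

Lemma grp_emb g j : grp (emb g j) = g.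
Proof. by rewrite /grp /= divnMDl // divn_small // addn0. Qed.

Lemma proj_emb g j : proj (emb g j) = j.
Proof. by apply: val_inj => /=; rewrite proj_val /= modnMDl modn_small. Qed.

Lemma emb_proj x (g : 'I_q) : grp x = g -> emb g (proj x) = x.
Proof. by move=> h; apply: val_inj => /=; rewrite proj_val -h /grp -divn_eq. Qed.

Lemma grp_proj_inj x y : grp x = grp y -> proj x = proj y -> x = y.
Proof.
move=> h1 h2; apply: val_inj => /=; rewrite (divn_eq x n) (divn_eq y n).
move: h1; rewrite /grp => ->; by rewrite -!proj_val h2.
Qed.

Lemma grp_lt x : grp x < q.
Proof. by rewrite /grp ltn_divLR. Qed.

Lemma restr_perm s (g : 'I_q) : perm_eq s (enum 'I_m) ->
  perm_eq (restr g s) (enum 'I_n).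
Proof.
move=> hp; apply: uniq_perm; last 1 first.
- move=> j; rewrite mem_enum; apply/mapP; exists (emb g j); last by rewrite proj_emb.
  by rewrite mem_filter grp_emb eqxx (perm_mem hp) mem_enum.
- rewrite map_inj_in_uniq; first by apply: filter_uniq; rewrite (perm_uniq hp) enum_uniq.
  move=> x y; rewrite !mem_filter => /andP [/eqP hx _] /andP [/eqP hy _].
  by apply: grp_proj_inj; rewrite hx hy.
- exact: enum_uniq.
Qed.

Lemma take_restr s x : uniq s -> x \in s ->
  restr (grp x) (take (index x s).+1 s) =
  take (index (proj x) (restr (grp x) s)).+1 (restr (grp x) s).
Proof.
move=> us xs; case/splitPr: xs us => l l'.
rewrite cat_uniq /= => /and3P [_ hnx _].
have hx : x \notin l by move: hnx; rewrite negb_or => /andP [].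
rewrite take_index_split // /restr !filter_cat /= eqxx /= !map_cat /=.
rewrite take_index_split //.
apply/mapP => -[y]; rewrite mem_filter => /andP [/eqP hy yl] hpy.
by move: hx; rewrite -(grp_proj_inj hy (esym hpy)) yl.
Qed.

Definition S' (S : gks_S n) : gks_S m :=
  fun s => if s is y :: s' then S (restr (grp (last y s')) s) else false.

Lemma S'_rcons S t x : S' S (rcons t x) = S (restr (grp x) (rcons t x)).
Proof. by case: t => [|y t] //=; rewrite last_rcons. Qed.

Lemma S'_take S s x : x \in s ->
  S' S (take (index x s).+1 s) = S (restr (grp x) (take (index x s).+1 s)).
Proof. by move=> hx; rewrite take_index_rcons // S'_rcons -take_index_rcons. Qed.

Definition loc (g : 'I_q) (sigma : {ffun 'I_m -> bool}) : {ffun 'I_n -> bool} :=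
  [ffun j => sigma (emb g j)].

Definition T' (T : gks_T n) (a : nat) : gks_T m := fun sigma =>
  if [pick g : 'I_q | a < #|T (loc g sigma)|] is Some g
  then emb g @: T (loc g sigma)
  else \bigcup_(g < q) emb g @: T (loc g sigma).

Lemma T'_card (T : gks_T n) a b : q * a <= b -> a <= b ->
  (forall sigma, #|T sigma| <= b) -> forall sigma, #|T' T a sigma| <= b.
Proof.
move=> hqa hab hT sigma; rewrite /T'; case: pickP => [g _|hn].
- exact: leq_trans (leq_imset_card _ _) (hT _).
- apply: leq_trans (card_bigcup_leq _) _.
  apply: leq_trans hqa; rewrite -[q in q * a]card_ord -sum_nat_const.
  apply: leq_sum => g _; apply: leq_trans (leq_imset_card _ _) _.
  by move: (hn g); rewrite /= ltnNge => /negbFE.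
Qed.

Lemma T'_correct (S : gks_S n) (T : gks_T n) a b :
  kkAn_strategy b a S T ->
  forall (y : 'I_m) (s' : seq 'I_m) (b0 : bool),
      perm_eq (y :: s') (enum 'I_m) ->
      last y s' \in T' T a (final_array (S' S) (y :: s') b0).
Proof.
move=> [[hTc _] hA] y s' b0; rewrite lastI.
move: (belast y s') (last y s') => t z hp.
set sigma := final_array _ _ _.
have up : uniq (rcons t z) by rewrite (perm_uniq hp) enum_uniq.
have memp : forall x, x \in rcons t z by move=> x; rewrite (perm_mem hp) mem_enum.
pose g0 : 'I_q := Ordinal (grp_lt z).
have clA : forall g : 'I_q, g != g0 -> loc g sigma = alice_array S (restr g (rcons t z)).
  move=> g hg; apply/ffunP => j; rewrite !ffunE index_last //.
  have -> : emb g j != z.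
    apply: contra hg => /eqP hz; apply/eqP/val_inj => /=; by rewrite -hz grp_emb.
  rewrite S'_take // take_restr // grp_emb proj_emb //.
have hr : restr g0 (rcons t z) = rcons (restr g0 t) (proj z).
  by rewrite /restr filter_rcons /= eqxx map_rcons.
have clB : loc g0 sigma = final_array S (restr g0 (rcons t z)) b0.
  apply/ffunP => j; rewrite !ffunE.
  have ur : uniq (restr g0 (rcons t z)) by rewrite (perm_uniq (restr_perm g0 hp)) enum_uniq.
  have jr : j \in restr g0 (rcons t z) by rewrite (perm_mem (restr_perm g0 hp)) mem_enum.
  rewrite index_last // hr index_last -?hr //.
  case: (eqVneq j (proj z)) => [->|hj].
    by rewrite emb_proj // eqxx.
  have -> : emb g0 j != z.
    by apply: contra hj => /eqP <-; rewrite proj_emb.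
  by rewrite S'_take // take_restr // grp_emb proj_emb.
have hzT : proj z \in T (loc g0 sigma).
  rewrite clB hr; have [y' [s'' [e he]]] := rcons_cons (restr g0 t) (proj z).
  rewrite e -he; apply: hTc; rewrite -e -hr; exact: restr_perm.
have hz : z \in emb g0 @: T (loc g0 sigma).
  by apply/imsetP; exists (proj z) => //; rewrite emb_proj.
rewrite /T'; case: pickP => [g hg|hn].
- case: (eqVneq g g0) => [->//|hg0].
  move: hg; rewrite clA // ltnNge (hA _ (restr_perm g hp)) //.
- by apply/bigcupP; exists g0.
Qed.

End Constr.

Theorem lemma4 (a b n : nat) :
  0 < a -> 0 < b -> 0 < n -> a <= b ->
  (exists (S : gks_S n) (T : gks_T n), kkAn_strategy b a S T) ->
  exists (S : gks_S (b %/ a * n)) (T : gks_T (b %/ a * n)), kn_strategy b S T.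
Proof.
case: n => [//|n'] ha hb _ hab [S [T hST]].
exists (S' S), (T' T a); split.
- exact: T'_correct hST.
- apply: T'_card => //; first by rewrite leq_divM.
  by case: hST => [[_ h] _].
Qed.
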